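(* Let $G$ be a finite group with a fixed supercharacter theory and let $\iota,\alpha\in\mathrm{scf}(G)$ with $\langle\iota,\alpha\rangle=1$; set $\beta=\alpha$. Then the linear character $\alpha_\bullet\rangle$ of $\mathcal{H}_{(\iota,\alpha,\beta)}$ is odd, i.e. $\mathrm{Res}_{\mathcal{H}_n}(\alpha_\bullet\rangle^{-1})=(-1)^n\,\mathrm{Res}_{\mathcal{H}_n}(\alpha_\bullet\rangle)$ for every $n$, where $\mathcal{H}_n=\mathrm{scf}(G^{n-1})$ is the degree-$n$ component.
   Context: Supercharacter theory: set partition $\mathtt{Cl}$ of $G$ and pairwise orthogonal characters $\mathtt{Ch}$ forming a basis of $\mathrm{scf}(G)=\{\psi:G\to\mathbb{C}$ constant on blocks of $\mathtt{Cl}\}$, with $\mathbf{reg}\in\mathrm{scf}(G)$, $\mathbb{1}\in\mathtt{Ch}$; $\langle\psi,\gamma\rangle=|G|^{-1}\sum_g\psi(g)\overline{\gamma(g)}$. For $n\ge1$, $G^{n-1}=G\times\cdots\times G\times\{1\}$ ($n-1$ copies of $G$), $\mathrm{scf}(G^{n-1})$ is spanned by $\psi_1\otimes\cdots\otimes\psi_{n-1}\otimes\chi^{()}:(g_1,\dots,g_{n-1},1)\mapsto\prod\psi_j(g_j)$ ($\chi^{()}$ trivial character of the trivial group), with the usual inner product of $G^{n-1}$; $\mathrm{scf}(G^{-1}):=\mathbb{C}\chi^\emptyset$, $\langle\chi^\emptyset,\chi^\emptyset\rangle=1$. $\mathcal{H}_{(\iota,\alpha,\beta)}=\bigoplus_{n\ge0}\mathrm{scf}(G^{n-1})$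 is the graded connected Hopf algebra with unit $\chi^\emptyset$, product $(\gamma_1\otimes\cdots\otimes\gamma_{m-1}\otimes\chi^{()})\cdot(\psi_1\otimes\cdots\otimes\psi_{n-1}\otimes\chi^{()})=\gamma_1\otimes\cdots\otimes\gamma_{m-1}\otimes\iota\otimes\psi_1\otimes\cdots\otimes\psi_{n-1}\otimes\chi^{()}$, coproduct $\Delta(\psi)=\sum_{A\subseteq[n]}\psi^{A}\otimes\psi^{[n]\setminus A}$ for $\psi=\psi_1\otimes\cdots\otimes\psi_{n-1}\otimes\chi^{()}$, where $\psi^\emptyset=\chi^\emptyset$; for nonempty $A=\{a_1<\dots<a_k\}$, $\psi^{A}=\lambda_A\,x_{a_1}\otimes\cdots\otimes x_{a_{k-1}}\otimes\chi^{()}$ with $x_{a_i}=\psi_{a_i}$ if $a_{i+1}=a_i+1$, else $\langle\psi_{a_i},\alpha\rangle\iota$, and $\lambda_A=\langle\psi_{a_k},\alpha\rangle$ if $a_k<n$, $1$ if $a_k=n$; $\psi^{[n]\setminus A}$ is the same with $\beta$ in place of $\alpha$; counit = projection to degree 0. $\alpha_\bullet\rangle:\mathcal{H}\to\mathbb{C}$ is the linear map $\gamma\mapsto\langle\gamma,\alpha_n\rangle$ on degree $n$, where $\alpha_n=\alpha^{\otimes(n-1)}\otimes\chi^{()}$ and $\alpha_0=\chi^\emptyset$; it is an algebra homomorphism (linear character), and the inverse is taken in the group of linear characters under convolution $\zeta\circ\xi=m_{\mathbb{C}}(\zeta\otimes\xi)\Delta$. *)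

(* Defs.v *)
From HB Require Import structures.
From mathcomp Require Import all_boot all_order all_algebra all_fingroup all_field all_character.
Unset Printing Implicit Defensive.
Import GRing.Theory Num.Theory.
Local Open Scope ring_scope.

Section Defs.
Variable gT : finGroupType.

Definition blockconst (Cl : {set {set gT}}) (f : gT -> algC) : Prop :=
  forall x y, pblock Cl x = pblock Cl y -> f x = f y.

Definition supercharacter_theory (Cl : {set {set gT}}) (Ch : seq 'CF([set: gT])) : Prop :=
  [/\ partition Cl [set: gT],
      all (fun chi => chi \is a character) Ch /\ pairwise_orthogonal Ch,
      (forall chi, chi \in Ch -> blockconst Cl (fun x => chi x)),
      (forall f : gT -> algC, blockconst Cl f ->
          (exists2 phi, phi \in <<Ch>>%VS & forall x, phi x = f x))
    & blockconst Cl (fun x => cfReg [set: gT] x) /\ 1 \in Ch].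

Definition tup (m : nat) := {ffun 'I_m -> gT}.

(* degree-n component: functions on G^{n-1} (G^{-1} := G^0, one-dimensional) *)
Definition Hdeg (n : nat) := tup n.-1 -> algC.

Definition scf_prod (Cl : {set {set gT}}) (n : nat) (f : Hdeg n) : Prop :=
  forall g g' : tup n.-1, (forall j, pblock Cl (g j) = pblock Cl (g' j)) -> f g = f g'.

(* linear functionals on H, given degreewise *)
Definition lfun := forall n : nat, Hdeg n -> algC.

(* alpha_. > : f in degree n |-> < f, alpha^{(x) n-1} (x) chi^() > *)
Definition inner_alpha (alpha : 'CF([set: gT])) : lfun := fun n f =>
  (#|gT|%:R ^- (n.-1)) * \sum_(g : tup n.-1) f g * (\prod_(j < n.-1) alpha (g j))^*.

Definition tget (m : nat) (h : tup m) (s : nat) : gT :=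
  if insub s is Some i then h i else 1%g.

(* 0-based positions: position p in 'I_n stands for index p+1 of [n] *)
Definition memn (n : nat) (S : {set 'I_n}) (m : nat) : bool :=
  [exists a in S, nat_of_ord a == m].
Definition rankn (n : nat) (S : {set 'I_n}) (m : nat) : nat :=
  #|[set a in S | (nat_of_ord a < m)%N]|.
Arguments memn {n} S m.
Arguments rankn {n} S m.
Arguments tget {m} h s.

(* kernel of psi |-> psi^S on the coordinate j (0-based), gam = alpha or beta *)
Definition kern (iota gam : 'CF([set: gT])) (n : nat) (S : {set 'I_n})
    (j : nat) (x : gT) (h : tup #|S|.-1) : algC :=
  if memn S j then
    if memn S j.+1 then (x == tget h (rankn S j))%:R
    else (gam x)^* / #|gT|%:R *
         (if [exists a in S, (j < nat_of_ord a)%N] then iota (tget h (rankn S j)) else 1)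
  else 1.
Arguments kern iota gam {n} S j x h.

(* the A-summand psi^A (x) psi^{[n]\A} of Delta(f), as a function on G^{|A|-1} x G^{n-|A|-1},
   i.e. the multilinear extension of the defining formula on pure tensors *)
Definition coprod_term (iota alpha beta : 'CF([set: gT])) (n : nat) (A : {set 'I_n})
    (f : Hdeg n) (h : tup #|A|.-1) (h' : tup #|~: A|.-1) : algC :=
  \sum_(g : tup n.-1) f g *
     \prod_(j < n.-1) (kern iota alpha A j (g j) h * kern iota beta (~: A) j (g j) h').
Arguments coprod_term iota alpha beta {n} A f h h'.

(* convolution  z o x = m (z (x) x) Delta *)
Definition conv (iota alpha beta : 'CF([set: gT])) (z x : lfun) : lfun := fun n f =>
  \sum_(A : {set 'I_n})
     z #|A| (fun h => x #|~: A| (fun h' => coprod_term iota alpha beta A f h h')).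

Definition counit : lfun := fun n f => (n == 0%N)%:R * f [ffun => 1%g].

Definition sign_twist (z : lfun) : lfun := fun n f => (-1) ^+ n * z n f.

End Defs.
Arguments blockconst {gT} Cl f.
Arguments supercharacter_theory {gT} Cl Ch.
Arguments scf_prod {gT} Cl {n} f.
Arguments inner_alpha {gT} alpha n f.
Arguments conv {gT} iota alpha beta z x n f.
Arguments counit {gT} n f.
Arguments sign_twist {gT} z n f.

(* Main.v *)
Require Import Defs.
From HB Require Import structures.
From mathcomp Require Import all_boot all_order all_algebra all_fingroup all_field all_character.
From mathcomp Require Import ring.
Import GRing.Theory Num.Theory.
Local Open Scope ring_scope.
Set Implicit Arguments. Unset Strict Implicit. Unset Printing Implicit Defensive.
#[local] Arguments rankn {n} S m.
#[local] Arguments memn {n} S m.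
#[local] Arguments tget {gT m} h s.
#[local] Arguments kern {gT} iota gam {n} S j x h.
#[local] Arguments coprod_term {gT} iota alpha beta {n} A f h h'.
Lemma sign_sum n : \sum_(A : {set 'I_n}) (-1) ^+ #|A| = (n == 0)%:R :> algC.
Proof.
case: n => [|k].
  rewrite (big_pred1 set0) ?cards0 ?expr0 // => A.
  by apply/esym/eqP/setP => -[].
set t := fun A : {set 'I_k.+1} => if ord0 \in A then A :\ ord0 else ord0 |: A.
have tK : involutive t.
  move=> A; rewrite /t; case: (boolP (ord0 \in A)) => H.
    by rewrite setD11 setD1K.
  by rewrite setU11 setU1K.
have tc A : (-1) ^+ #|t A| = - (-1) ^+ #|A| :> algC.
  rewrite /t; case: ifP => H.
    by rewrite -[in RHS](setD1K H) cardsU1 setD11 exprS mulN1r opprK.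
  by rewrite cardsU1 H exprS mulN1r.
set S := (X in X = _).
have : S = - S.
  rewrite {1}/S (reindex_inj (can_inj tK)) /= -sumrN.
  by apply: eq_bigr => A _; rewrite tc.
move/eqP; rewrite -subr_eq0 opprK -mulr2n mulrn_eq0 /= => /eqP ->.
by [].
Qed.
Lemma triple (I J K : finType) m (F : K -> algC) (X : I -> K -> 'I_m -> algC)
   (Y : J -> K -> 'I_m -> algC) (a b : algC) (CA : I -> algC) (CB : J -> algC) :
  a * \sum_i (b * \sum_j (\sum_k F k * \prod_(l < m) (X i k l * Y j k l)) * CB j) * CA i
  = \sum_k F k * (a * b * (\sum_i CA i * \prod_l X i k l) * (\sum_j CB j * \prod_l Y j k l)).
Proof.
transitivity (\sum_i \sum_j \sum_k (F k * (a * b * (CA i * \prod_l X i k l) * (CB j * \prod_l Y j k l)))).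
  rewrite mulr_sumr /=; apply: eq_bigr => i _.
  transitivity (a * b * CA i * \sum_j (\sum_k F k * \prod_(l < m) (X i k l * Y j k l)) * CB j).
    by ring.
  rewrite mulr_sumr /=; apply: eq_bigr => j _.
  transitivity (a * b * CA i * CB j * \sum_k F k * \prod_(l < m) (X i k l * Y j k l)).
    by ring.
  rewrite mulr_sumr /=; apply: eq_bigr => k _.
  rewrite big_split /=; ring.
transitivity (\sum_i \sum_k \sum_j (F k * (a * b * (CA i * \prod_l X i k l) * (CB j * \prod_l Y j k l)))).
  by apply: eq_bigr => i _; rewrite exchange_big.
rewrite exchange_big /=; apply: eq_bigr => k _.
transitivity (F k * a * b * \sum_i \sum_j ((CA i * \prod_l X i k l) * (CB j * \prod_l Y j k l))).
  rewrite mulr_sumr; apply: eq_bigr => i _; rewrite mulr_sumr; apply: eq_bigr => j _; ring.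
have -> : \sum_i \sum_j ((CA i * \prod_l X i k l) * (CB j * \prod_l Y j k l))
   = (\sum_i CA i * \prod_l X i k l) * (\sum_j CB j * \prod_l Y j k l).
  by rewrite mulr_suml; apply: eq_bigr => i _; rewrite mulr_sumr.
ring.
Qed.

Lemma rankS n (S : {set 'I_n}) j : rankn S j.+1 = (rankn S j + memn S j)%N.
Proof.
rewrite /rankn /memn; case: existsP => [[a /andP[aS /eqP aj]] | H].
  rewrite (_ : [set b in S | (b < j.+1)%N] = a |: [set b in S | (b < j)%N]).
    by rewrite cardsU1 !inE aj ltnn andbF addn1 add1n.
  apply/setP => b; rewrite !inE ltnS leq_eqVlt -aj.
  case: (eqVneq b a) => [->|nba]; first by rewrite aS eqxx.
  have -> : (nat_of_ord b == nat_of_ord a) = false by apply/negbTE.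
  by [].
rewrite addn0; apply: eq_card => b; rewrite !inE ltnS leq_eqVlt.
case: (boolP (b \in S)) => //= bS.
case: eqP => // bj; case: H; exists b; by rewrite bS bj eqxx.
Qed.

Lemma rank_mono n (S : {set 'I_n}) j j' : (j <= j')%N -> (rankn S j <= rankn S j')%N.
Proof.
move=> le; apply: subset_leq_card; apply/subsetP => b; rewrite !inE.
by case/andP => -> /leq_trans->.
Qed.

Lemma rank_n n (S : {set 'I_n}) : rankn S n = #|S|.
Proof. by apply: eq_card => b; rewrite !inE ltn_ord andbT. Qed.

Lemma rank0 n (S : {set 'I_n}) : rankn S 0 = 0%N.
Proof. by rewrite /rankn (_ : [set _ in S | _] = set0) ?cards0 //; apply/setP => b; rewrite !inE andbF. Qed.

Lemma rank_le n (S : {set 'I_n}) j : (rankn S j <= #|S|)%N.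
Proof. by apply: subset_leq_card; apply/subsetP => b; rewrite inE => /andP[]. Qed.

Lemma rank_lt n (S : {set 'I_n}) j j' : memn S j -> (j < j')%N -> (rankn S j < rankn S j')%N.
Proof. by move=> mj lt; apply: (leq_trans _ (rank_mono S lt)); rewrite rankS mj addn1. Qed.

Lemma memn_lt n (S : {set 'I_n}) j : memn S j -> (j < n)%N.
Proof. by case/existsP => a /andP[_ /eqP <-]. Qed.

Lemma ivt (F : nat -> nat) : F 0%N = 0%N -> (forall j, F j.+1 <= (F j).+1)%N ->
  forall N r, (r < F N)%N -> exists j, [/\ (j < N)%N, F j = r & F j.+1 = r.+1].
Proof.
move=> F0 FS; elim=> [|N IH] r; first by rewrite F0.
move=> rlt; case: (ltnP r (F N)) => h.
  by case: (IH r h) => j [jN ??]; exists j; split => //; apply: ltnW.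
have e : F N = r by apply/eqP; rewrite eqn_leq h /= -ltnS (leq_trans rlt (FS N)).
exists N; split => //; apply/eqP; rewrite eqn_leq rlt andbT -e; exact: FS.
Qed.

Lemma rank_surj n (S : {set 'I_n}) r : (r < #|S|.-1)%N ->
  exists j, [/\ memn S j, (j.+1 < n)%N, [exists a in S, (j < nat_of_ord a)%N] & rankn S j = r].
Proof.
move=> rlt.
have F0 := rank0 S.
have FS j : (rankn S j.+1 <= (rankn S j).+1)%N by rewrite rankS -addn1 leq_add2l leq_b1.
have memS j : rankn S j.+1 = (rankn S j).+1 -> memn S j.
  by rewrite rankS -addn1 => /eqP; rewrite eqn_add2l; case: (memn S j).
have h1 : (r < rankn S n)%N by rewrite rank_n; apply: leq_trans rlt (leq_pred _).
have h2 : (r.+1 < rankn S n)%N by rewrite rank_n; move: rlt; case: #|S| => //.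
case: (ivt F0 FS h1) => j [jn Fj FSj].
case: (ivt F0 FS h2) => j' [jn' Fj' FSj'].
have jj' : (j < j')%N.
  rewrite ltnNge; apply/negP => /(rank_mono S); rewrite Fj Fj'; by rewrite ltnn.
have mj' : memn S j' by apply: memS; rewrite Fj'.
exists j; split.
- by apply: memS; rewrite Fj.
- by apply: (leq_trans _ jn').
- case/existsP: mj' => a /andP[aS /eqP aj]; apply/existsP; exists a; by rewrite aS aj.
- exact: Fj.
Qed.

Lemma reidx (I : finType) (P : pred I) (rho : I -> nat) m :
  {in P &, injective rho} -> (forall j, P j -> rho j < m)%N ->
  (forall r, r < m -> exists2 j, P j & rho j = r)%N ->
  exists sig : 'I_m -> I, (forall r, P (sig r) /\ rho (sig r) = r) /\
    forall F : I -> algC, \prod_(j | P j) F j = \prod_(r < m) F (sig r).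
Proof.
move=> inj lt sur.
have H : forall r : 'I_m, exists j, P j /\ rho j = r.
  by move=> r; case: (sur r (ltn_ord r)) => j Pj rj; exists j.
have [sig Hs] := fin_all_exists H.
exists sig; split => // F; clear H.
case: m sig Hs lt sur => [|m] sig Hs lt sur.
  rewrite big_ord0 big_pred0 // => j; apply/negP => Pj; by have := lt j Pj.
rewrite (reindex sig); first by apply: eq_bigl => r; case: (Hs r).
exists (fun j => inord (rho j)) => [r _ | j Pj].
  by rewrite (Hs r).2 inord_val.
apply: inj; rewrite ?unfold_in; first by case: (Hs (inord (rho j))).
  by move: Pj; rewrite inE.
rewrite (Hs _).2 inordK // lt //; by move: Pj; rewrite inE.
Qed.

Lemma tgetE (gT : finGroupType) m (h : tup gT m) (r : 'I_m) : tget h r = h r.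
Proof. by rewrite /tget valK. Qed.

Lemma sum_bij (gT : finGroupType) m (I : finType) (P : pred I) (rho : I -> nat) (c : gT -> algC)
    (F : I -> gT -> algC) :
  {in P &, injective rho} -> (forall j, P j -> rho j < m)%N ->
  (forall r, r < m -> exists2 j, P j & rho j = r)%N ->
  \sum_(h : tup gT m) (\prod_(r < m) c (h r)) * \prod_(j | P j) F j (tget h (rho j))
   = \prod_(j | P j) \sum_y c y * F j y.
Proof.
move=> inj lt sur; case: (reidx inj lt sur) => sig [Hs Hp].
rewrite Hp bigA_distr_bigA; apply: eq_bigr => h _.
rewrite Hp -big_split; apply: eq_bigr => r _ /=.
by rewrite (Hs r).2 tgetE.
Qed.

Section Key.
Variable gT : finGroupType.
Variables iota alpha : 'CF([set: gT]).
Hypothesis Hia : '[iota, alpha] = 1.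
Let N := #|gT|%:R : algC.

Lemma N_neq0 : N != 0.
Proof. by rewrite /N pnatr_eq0 -lt0n -cardsT cardG_gt0. Qed.

Lemma sum_ia : \sum_y iota y * (alpha y)^* = N.
Proof.
move: Hia; rewrite cfdotE cardsT => H.
have E : \sum_(x in [set: gT]) iota x * (alpha x)^* = \sum_y iota y * (alpha y)^*.
  by apply: eq_bigl => y; rewrite inE.
rewrite -E; apply: (mulfI (invr_neq0 N_neq0)); by rewrite H mulVf // N_neq0.
Qed.

Definition wS n (S : {set 'I_n}) (j : nat) (x : gT) : algC :=
  if memn S j then (alpha x)^* / N else 1.

Lemma kern_nP n (S : {set 'I_n}) (j : nat) x h :
  ~~ (memn S j && [exists a in S, (j < nat_of_ord a)%N]) ->
  kern iota alpha S j x h = wS S j x.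
Proof.
rewrite /kern /wS; case: (boolP (memn S j)) => //= mj nex.
rewrite (negbTE nex) mulr1.
case: (boolP (memn S j.+1)) => // /existsP[a /andP[aS /eqP aj]].
exfalso; move/negP: nex; apply; apply/existsP; exists a; by rewrite aS aj ltnSn.
Qed.

Definition K n (S : {set 'I_n}) (j : nat) (x y : gT) : algC :=
  if memn S j.+1 then (x == y)%:R else (alpha x)^* / N * iota y.

Lemma kern_P n (S : {set 'I_n}) (j : nat) x h :
  memn S j && [exists a in S, (j < nat_of_ord a)%N] ->
  kern iota alpha S j x h = K S j x (tget h (rankn S j)).
Proof. by rewrite /kern /K => /andP[-> ->]. Qed.

Lemma sumK n (S : {set 'I_n}) (j : nat) x :
  \sum_y (alpha y)^* * K S j x y = (alpha x)^*.
Proof.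
rewrite /K; case: (memn S j.+1).
  rewrite (bigD1 x) //= big1 ?addr0 => [|y ynx]; last by rewrite eq_sym (negbTE ynx) mulr0.
  by rewrite eqxx mulr1.
transitivity ((alpha x)^* / N * \sum_y iota y * (alpha y)^*).
  by rewrite big_distrr; apply: eq_bigr => y _; rewrite mulrCA; congr (_ * _); exact: mulrC.
by rewrite sum_ia divfK // N_neq0.
Qed.

Lemma keyP n (S : {set 'I_n}) (g : tup gT n.-1) :
  \sum_(h : tup gT #|S|.-1) (\prod_(r < #|S|.-1) (alpha (h r))^*) *
      \prod_(j < n.-1) kern iota alpha S j (g j) h
  = N ^+ (#|S|.-1) * \prod_(j < n.-1) wS S j (g j).
Proof.
set P := fun j : 'I_n.-1 => memn S j && [exists a in S, (j < nat_of_ord a)%N].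
have inj : {in P &, injective (fun j : 'I_n.-1 => rankn S j)}.
  move=> j j' Pj Pj' e; apply: val_inj => /=.
  move: Pj Pj'; rewrite /in_mem /= /P => /andP[mj _] /andP[mj' _].
  case: (ltngtP j j') => // lt.
    by have := rank_lt mj lt; rewrite e ltnn.
  by have := rank_lt mj' lt; rewrite e ltnn.
have lt : forall j, P j -> (rankn S j < #|S|.-1)%N.
  move=> j /andP[mj /existsP[a /andP[aS ja]]].
  have ma : memn S a by apply/existsP; exists a; rewrite aS eqxx.
  have h1 := rank_lt mj ja.
  have h2 : (rankn S a < #|S|)%N.
    by apply: leq_trans (rank_le S a.+1); rewrite rankS ma addn1.
  by rewrite -ltnS (ltn_predK h2); apply: leq_trans h2.
have sur : forall r, (r < #|S|.-1)%N -> exists2 j, P j & rankn S j = r.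
  move=> r /rank_surj[j [mj jn ex rj]].
  have jn' : (j < n.-1)%N by rewrite -ltnS (ltn_predK jn).
  by exists (Ordinal jn'); rewrite /P /= ?mj ?ex.
transitivity (\sum_(h : tup gT #|S|.-1) ((\prod_(r < #|S|.-1) (alpha (h r))^*) *
      \prod_(j | P j) K S j (g j) (tget h (rankn S j))) * \prod_(j | ~~ P j) wS S j (g j)).
  apply: eq_bigr => h _; rewrite (bigID P) /= mulrA; congr (_ * _ * _).
    by apply: eq_bigr => j Pj; rewrite kern_P.
  by apply: eq_bigr => j Pj; rewrite kern_nP.
rewrite -big_distrl /= (@sum_bij gT _ _ P _ (fun y => (alpha y)^*) (fun j y => K S j (g j) y) inj lt sur).
under eq_bigr => j _ do rewrite sumK.
rewrite [in RHS](bigID P) /= mulrA; congr (_ * _).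
case: (reidx inj lt sur) => sig [_ Hp].
have -> : N ^+ #|S|.-1 = \prod_(j | P j) N by rewrite Hp prodr_const card_ord.
rewrite -big_split /=; apply: eq_bigr => j /andP[mj _].
by rewrite /wS mj mulrC divfK // N_neq0.
Qed.

Lemma memnE n (S : {set 'I_n}) j (jn : (j < n)%N) : memn S j = (Ordinal jn \in S).
Proof.
apply/existsP/idP => [[a /andP[aS /eqP aj]] | H].
  by rewrite (_ : Ordinal jn = a) //; apply: val_inj.
by exists (Ordinal jn); rewrite H eqxx.
Qed.

Lemma wS_C n (A : {set 'I_n}) (j : 'I_n.-1) x :
  wS A j x * wS (~: A) j x = (alpha x)^* / N.
Proof.
have jn : (j < n)%N by apply: (leq_trans (ltn_ord j)); apply: leq_pred.
rewrite /wS !(memnE _ jn) inE; case: (Ordinal jn \in A) => /=; by rewrite ?mulr1 ?mul1r.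
Qed.

Lemma VA n (A : {set 'I_n}) (f : Hdeg gT n) :
  inner_alpha alpha #|A| (fun h => inner_alpha alpha #|~: A|
     (fun h' => coprod_term iota alpha alpha A f h h')) = inner_alpha alpha n f.
Proof.
rewrite /inner_alpha /coprod_term.
rewrite (@triple _ _ _ n.-1 f (fun h g l => kern iota alpha A l (g l) h)
   (fun h' g l => kern iota alpha (~:A) l (g l) h') _ _
   (fun h => (\prod_(j < #|A|.-1) alpha (h j))^*)
   (fun h' => (\prod_(j < #|~:A|.-1) alpha (h' j))^*)) /=.
rewrite mulr_sumr; apply: eq_bigr => g _.
under eq_bigr => h _ do rewrite rmorph_prod.
under [X in _ * (_ * X) = _]eq_bigr => h _ do rewrite rmorph_prod.
rewrite !keyP.
have E : \prod_(j < n.-1) wS A j (g j) * \prod_(j < n.-1) wS (~:A) j (g j)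
   = (\prod_(j < n.-1) alpha (g j))^* / N ^+ n.-1.
  rewrite -big_split /=; under eq_bigr => j _ do rewrite wS_C.
  by rewrite prodf_div rmorph_prod prodr_const card_ord.
have nz k : N ^+ k != 0 by rewrite expf_neq0 // N_neq0.
transitivity (f g * ((N ^+ #|A|.-1)^-1 * N ^+ #|A|.-1) * ((N ^+ #|~:A|.-1)^-1 * N ^+ #|~:A|.-1)
   * (\prod_(j < n.-1) wS A j (g j) * \prod_(j < n.-1) wS (~:A) j (g j))).
  rewrite /N; ring.
rewrite !mulVf // E /N; ring.
Qed.

Lemma VA2 n (A : {set 'I_n}) (f : Hdeg gT n) c :
  inner_alpha alpha #|A| (fun h => c * inner_alpha alpha #|~: A|
     (fun h' => coprod_term iota alpha alpha A f h h')) = c * inner_alpha alpha n f.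
Proof.
transitivity (c * inner_alpha alpha #|A| (fun h => inner_alpha alpha #|~: A|
     (fun h' => coprod_term iota alpha alpha A f h h'))); last by rewrite VA.
rewrite /inner_alpha !mulr_sumr; apply: eq_bigr => h _; ring.
Qed.

Lemma inner0 (f : Hdeg gT 0) : inner_alpha alpha 0 f = f [ffun => 1%g].
Proof.
rewrite /inner_alpha /= expr0 invr1 mul1r (big_pred1 [ffun => 1%g]).
  by rewrite big_ord0 rmorph1 mulr1.
by move=> g; apply/esym/eqP/ffunP => -[].
Qed.

End Key.

Unset Implicit Arguments.
Theorem mainTheorem8 (gT : finGroupType) (Cl : {set {set gT}}) (Ch : seq 'CF([set: gT]))
    (iota alpha : 'CF([set: gT])) :
  supercharacter_theory Cl Ch ->
  blockconst Cl (fun x => iota x) -> blockconst Cl (fun x => alpha x) ->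
  '[iota, alpha] = 1 ->
  let beta := alpha in
  forall (n : nat) (f : Hdeg gT n), scf_prod Cl f ->
    conv iota alpha beta (sign_twist (inner_alpha alpha)) (inner_alpha alpha) n f = counit n f /\
    conv iota alpha beta (inner_alpha alpha) (sign_twist (inner_alpha alpha)) n f = counit n f.
Proof.
move=> _ _ _ Hia beta n f _; rewrite /beta /conv /sign_twist.
have fin : (n == 0)%:R * inner_alpha alpha n f = counit n f.
  rewrite /counit; case: n f => [|n] f; first by rewrite inner0.
  by rewrite !mul0r.
split.
  under eq_bigr => A _ do rewrite (VA Hia).
  by rewrite -mulr_suml sign_sum.
under eq_bigr => A _ do rewrite (VA2 Hia).
rewrite -mulr_suml -fin; congr (_ * _).
rewrite (reindex_inj (@setC_inj _)) /=; under eq_bigr => A _ do rewrite setCK.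
exact: sign_sum.
Qed.
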